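(* Consider the sovereign default economy described in the context, with lenders' constant (non-stochastic) per-period endowment $\bar z = z$, and suppose $\{c^{\ast},c^{L,\ast},B^{\ast},b^{\ast},m_R^{\ast},m_A^{\ast},\delta^{\ast}\}$, $\{V_R^{\ast},V_A^{\ast},W_R^{\ast},W_A^{\ast}\}$, a perceived law of motion $\Gamma$ and a price function $q$ form a recursive equilibrium of this economy. Then for any other constant lenders' endowment $\hat z \neq z$, there exists a recursive equilibrium of the economy with $\bar z=\hat z$ (all other primitives unchanged) having the identical bond price function $q$ and identical borrower allocations (consumption $c^{\ast}$, bond policy $B^{\ast}$ and default decisions $\delta^{\ast}$).
   Context: Time is discrete. Let $(Y_t)$ be a Markov chain on a finite set $\mathbb{Y}\subseteq\mathbb{R}_+$ with transition matrix $P_{Y'|Y}$, and let $(X_t)$ be i.i.d. on $\mathbb{X}=[\underline x,\bar x]$ with a Lebesgue density, independent of $(Y_t)$; $W_t=(X_t,Y_t)\in\mathbb{W}=\mathbb{X}\times\mathbb{Y}$ and the borrower's endowment at $t$ is $y_t+x_t$. $E_Y[\cdot\mid y]$ and $E_X[\cdot]$ denote expectations under $P_{Y'|Y}(\cdot\mid y)$ and under the law of $X$. A long-term bond is traded: each period a fraction $\lambda\in(0,1]$ matures and a coupon $\psi$ is paid on the remaining fraction $1-\lambda$. Bond holdings lie in a bounded set $\mathbb{B}\subseteq\mathbb{R}$. A price function is $q:\mathbb{Y}\times\mathbb{B}\to\mathbb{R}_+$. Borrower: period utility $u$ strictly increasing, strictly concave, satisfying Inada conditions; discount factor $\beta\in(0,1)$;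 re-entry probability $\pi\in(0,1)$; output cost $\phi:\mathbb{Y}\to\mathbb{Y}$ with $\phi(y)\le y$. Values: $V(w,B)=\max\{V_A(\underline x,y),V_R(w,B)\}$; $V_R(w,B)=\max_{B'\in\mathbb{B}}\{u(c)+\beta E[V(W',B')\mid w]\}$ with $c=y+x-q(y,B')(B'-(1-\lambda)B)+(\lambda+(1-\lambda)\psi)B$; $V_A(w)=u(y+x-\phi(y))+\beta E[(1-\pi)V_A(W')+\pi V(W',0)\mid w]$; default indicator $\delta(w,B)=\mathbf{1}\{V_R(w,B)\ge V_A(\underline x,y)\}$ (1 = repay). Lenders (a continuum of measure one, atomistic, price takers): discount factor $\gamma\in(0,1)$, robustness parameter $\theta\in(\underline\theta,+\infty]$, constant endowment $\bar z$. Let $\mathcal{M}=\{g:\mathbb{Y}\to\mathbb{R}_+:\sum_{y'}g(y')P_{Y'|Y}(y'\mid y)=1\ \forall y\}$ and, for $g\in\mathcal M$, $\mathcal{E}[g](y)=E_Y[g(Y')\log g(Y')\mid y]$. Given a perceived law of motion $\Gamma:\mathbb{W}\times\mathbb{B}\to\mathbb{B}$ for aggregate debt, $W_R(w,B,b)=\min_{m\in\mathcal M}\max_{c^L,b'}\{c^L+\theta\gamma\mathcal E[m](y)+\gamma E_Y[m(Y')\mathcal W(Y',B',b')\mid y]\}$ subject to $c^L=\bar z+q(y,B')(b'-(1-\lambda)b)-(\lambda+(1-\lambda)\psi)b$ and $B'=\Gamma(w,B)$, where $\mathcal W(y',B',b')=E_X[W(y',X',B',b')]$ and $W(w',B',b')=\delta(w',B')W_R(w',B',b')+(1-\delta(w',B'))W_A(y')$;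 and $W_A(y)=\min_{m\in\mathcal M}\{\bar z+\theta\gamma\mathcal E[m](y)+\gamma E_Y[m(Y')((1-\pi)W_A(Y')+\pi\mathcal W(Y',0,0))\mid y]\}$. A recursive equilibrium is a collection of policy functions (borrower consumption $c^{\ast}$ and bonds $B^{\ast}:\mathbb W\times\mathbb B\to\mathbb B$, lender consumption $c^{L,\ast}$ and bonds $b^{\ast}:\mathbb W\times\mathbb B^2\to\mathbb B$, distortions $m_R^{\ast}:\mathbb W\times\mathbb B^2\to\mathcal M$, $m_A^{\ast}:\mathbb Y\to\mathcal M$, default decisions $\delta^{\ast}:\mathbb W\times\mathbb B\to\{0,1\}$), value functions $V_R^{\ast},V_A^{\ast},W_R^{\ast},W_A^{\ast}$, a perceived law of motion $\Gamma$ and a price function $q$ such that: (1) the policies, distortions and values solve the borrower's and individual lender's problems above; (2) markets clear: $B^{\ast}(w,B)=b^{\ast}(w,B,B)$ for all $(w,B)$; (3) $B^{\ast}(w,B)=\Gamma(w,B)$ for all $(w,B)$. *)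

(* Defs.v *)
From HB Require Import structures.
From mathcomp Require Import all_boot all_order all_algebra.
From mathcomp Require Import all_classical all_reals all_analysis.
Set Implicit Arguments. Unset Strict Implicit. Unset Printing Implicit Defensive.
Import Order.TTheory GRing.Theory Num.Theory.
Import numFieldNormedType.Exports.
Local Open Scope classical_set_scope.
Local Open Scope ring_scope.

(* Y is the finite state space of the Markov chain (Y_t), embedded in R by [yv].
   Transition probabilities: [P y y'] = P_{Y'|Y}(y' | y).
   X_t is i.i.d. on [xl, xh] with Lebesgue density [fX].
   Functions on bonds are written as functions on R; all conditions are
   imposed only on arguments in [Bset] (and x in [xl,xh]). *)
Record economy (R : realType) (Y : finType) := Economy {
  yv : Y -> R;
  P : Y -> Y -> R;
  xl : R; xh : R;
  fX : R -> R;
  lam : R; psi : R;            (* maturity fraction, coupon *)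
  Bset : set R;
  u : R -> R; beta : R; pi_ : R; phi : Y -> Y;   (* borrower *)
  gam : R; thlow : R; theta : \bar R; zbar : R   (* lenders *)
}.

Section Model.
Context {R : realType} {Y : finType} (e : economy R Y).

Let xl := xl e. Let xh := xh e.

Definition primitives_ok : Prop :=
  injective (yv e) /\ (forall y, 0 <= yv e y) /\
  (forall y y', 0 <= P e y y') /\ (forall y, \sum_(y' : Y) P e y y' = 1) /\
  measurable_fun `[xl, xh] (fX e) /\ (forall x, 0 <= fX e x) /\
  (\int[lebesgue_measure]_(x in `[xl, xh]) (fX e x)%:E = 1)%E /\
  0 < lam e <= 1 /\
  (* 𝔹 is bounded (and contains 0, which is used in V(W',0)) *)
  (exists M : R, forall b, Bset e b -> `|b| <= M) /\ Bset e 0 /\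
  (forall a b, 0 < a -> a < b -> u e a < u e b) /\
  (forall a b t, 0 < a -> 0 < b -> a != b -> 0 < t < 1 ->
      t * u e a + (1 - t) * u e b < u e (t * a + (1 - t) * b)) /\
  (forall c, 0 < c -> derivable (u e) c 1) /\
  (derive1 (u e) c @[c --> 0^'+] --> +oo) /\
  (derive1 (u e) c @[c --> +oo] --> 0) /\
  0 < beta e < 1 /\ 0 < pi_ e < 1 /\ (forall y, yv e (phi e y) <= yv e y) /\
  0 < gam e < 1 /\ ((thlow e)%:E < theta e)%E.

Definition EX (g : R -> R) : R :=
  Rintegral lebesgue_measure `[xl, xh] (fun x => g x * fX e x).
Definition intX (g : R -> R) : Prop :=
  lebesgue_measure.-integrable `[xl, xh] (fun x => (g x * fX e x)%:E).

Definition EY (y : Y) (h : Y -> R) : R := \sum_(y' : Y) P e y y' * h y'.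

Definition inM (g : Y -> R) : Prop :=
  (forall y', 0 <= g y') /\ (forall y, \sum_(y' : Y) g y' * P e y y' = 1).
Definition ent (g : Y -> R) (y : Y) : R := EY y (fun y' => g y' * ln (g y')).

(* A candidate recursive equilibrium; x, y stand for w = (x, y). *)
Record eq_obj := EqObj {
  cB : R -> Y -> R -> R;
  BB : R -> Y -> R -> R;
  cL : R -> Y -> R -> R -> R;
  bL : R -> Y -> R -> R -> R;
  mR : R -> Y -> R -> R -> Y -> R;
  mA : Y -> Y -> R;
  dlt : R -> Y -> R -> bool;        (* δ*(w,B), true = repay *)
  VR : R -> Y -> R -> R;
  VA : R -> Y -> R;
  WR : R -> Y -> R -> R -> R;
  WA : Y -> R;
  Gam : R -> Y -> R -> R;
  q : Y -> R -> R
}.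

Variable s : eq_obj.

Definition inX (x : R) : Prop := xl <= x <= xh.

Definition Vfun (x : R) (y : Y) (B : R) : R := Num.max (VA s xl y) (VR s x y B).
Definition consB (x : R) (y : Y) (B B' : R) : R :=
  yv e y + x - q s y B' * (B' - (1 - lam e) * B) + (lam e + (1 - lam e) * psi e) * B.
Definition contV (y : Y) (B' : R) : R := EY y (fun y' => EX (fun x' => Vfun x' y' B')).

Definition borrower_optimal : Prop :=
  (forall y' B', Bset e B' -> intX (fun x' => Vfun x' y' B')) /\
  (forall y', intX (fun x' => VA s x' y')) /\
  (forall x y B, inX x -> Bset e B ->
     (* repayment problem: V_R = max over B' ∈ 𝔹 (u defined on c > 0) *)
     [/\ Bset e (BB s x y B),
         cB s x y B = consB x y B (BB s x y B) /\ 0 < cB s x y B,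
         VR s x y B = u e (cB s x y B) + beta e * contV y (BB s x y B),
         (forall B', Bset e B' -> 0 < consB x y B B' ->
             u e (consB x y B B') + beta e * contV y B' <= VR s x y B) &
         dlt s x y B = (VA s xl y <= VR s x y B)]) /\
  (forall x y, inX x ->
     VA s x y = u e (yv e y + x - yv e (phi e y)) +
       beta e * EY y (fun y' => EX (fun x' => (1 - pi_ e) * VA s x' y' + pi_ e * Vfun x' y' 0))).

Definition consL (y : Y) (B' b b' : R) : R :=
  zbar e + q s y B' * (b' - (1 - lam e) * b) - (lam e + (1 - lam e) * psi e) * b.
Definition Wfun (x : R) (y : Y) (B b : R) : R :=
  if dlt s x y B then WR s x y B b else WA s y.
Definition calW (y : Y) (B b : R) : R := EX (fun x => Wfun x y B b).

Definition JR (x : R) (y : Y) (B b : R) (m : Y -> R) (b' : R) : \bar R :=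
  ((consL y (Gam s x y B) b b' + gam e * EY y (fun y' => m y' * calW y' (Gam s x y B) b'))%:E
   + theta e * (gam e * ent m y)%:E)%E.
Definition JA (y : Y) (m : Y -> R) : \bar R :=
  ((zbar e + gam e * EY y (fun y' => m y' * ((1 - pi_ e) * WA s y' + pi_ e * calW y' 0 0)))%:E
   + theta e * (gam e * ent m y)%:E)%E.

Definition lender_optimal : Prop :=
  (forall y' B' b', Bset e B' -> Bset e b' -> intX (fun x => Wfun x y' B' b')) /\
  (forall x y B b, inX x -> Bset e B -> Bset e b ->
     [/\ Bset e (bL s x y B b) /\ inM (mR s x y B b),
         cL s x y B b = consL y (Gam s x y B) b (bL s x y B b),
         (WR s x y B b)%:E = JR x y B b (mR s x y B b) (bL s x y B b),
         (forall b', Bset e b' -> (JR x y B b (mR s x y B b) b' <=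
                                   JR x y B b (mR s x y B b) (bL s x y B b))%E) &
         (* m_R* solves the outer min of the (attained) inner max *)
         (forall m, inM m -> exists2 bm, Bset e bm &
            (forall b', Bset e b' -> (JR x y B b m b' <= JR x y B b m bm)%E) /\
            ((WR s x y B b)%:E <= JR x y B b m bm)%E)]) /\
  (forall y, inM (mA s y) /\ (WA s y)%:E = JA y (mA s y) /\
     (forall m, inM m -> (JA y (mA s y) <= JA y m)%E)).

Definition recursive_equilibrium : Prop :=
  (forall y B, Bset e B -> 0 <= q s y B) /\
  (forall x y B, inX x -> Bset e B -> Bset e (Gam s x y B)) /\
  borrower_optimal /\ lender_optimal /\
  (forall x y B, inX x -> Bset e B -> BB s x y B = bL s x y B B) /\
  (forall x y B, inX x -> Bset e B -> BB s x y B = Gam s x y B).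

End Model.

Definition with_zbar {R : realType} {Y : finType} (e : economy R Y) (z : R) : economy R Y :=
  Economy (yv e) (P e) (xl e) (xh e) (fX e) (lam e) (psi e) (Bset e) (u e) (beta e)
          (pi_ e) (phi e) (gam e) (thlow e) (theta e) z.

(* Main.v *)
Require Import Defs.
From HB Require Import structures.
From mathcomp Require Import all_boot all_order all_algebra.
From mathcomp Require Import all_classical all_reals all_analysis.
From mathcomp Require Import ring lra.
Set Implicit Arguments. Unset Strict Implicit. Unset Printing Implicit Defensive.
Import Order.TTheory GRing.Theory Num.Theory.
Import numFieldNormedType.Exports.
Local Open Scope classical_set_scope.
Local Open Scope ring_scope.

Section Helpers.
Context {R : realType} {Y : finType} (e : economy R Y).
Hypothesis pok : primitives_ok e.

Lemma fX_int : lebesgue_measure.-integrable `[xl e, xh e] (fun x => (fX e x)%:E).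
Proof.
case: pok => _ [_ [_ [_ [mf [f0 [i1 _]]]]]].
apply/integrableP; split; first exact/measurable_realfun.measurable_EFinP.
under eq_integral => x _ do rewrite gee0_abs ?lee_fin ?f0 //.
by rewrite i1 ltry.
Qed.

Lemma RintfX : Rintegral lebesgue_measure `[xl e, xh e] (fun x => fX e x) = 1.
Proof.
case: pok => _ [_ [_ [_ [mf [f0 [i1 _]]]]]].
by rewrite /Rintegral i1.
Qed.

Lemma EX_shift (g : R -> R) (K : R) : intX e g ->
  EX e (fun x => g x + K) = EX e g + K /\ intX e (fun x => g x + K).
Proof.
move=> ig; split.
  rewrite /EX.
  under eq_Rintegral => x _ do rewrite mulrDl.
  rewrite RintegralD //; last first.
    have : lebesgue_measure.-integrable `[xl e, xh e] (fun x => K%:E * (fX e x)%:E)%E.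
      apply: integrableZl; first exact: measurable_itv. exact: fX_int.
    apply: eq_integrable; first exact: measurable_itv.
    by move=> x _ /=; rewrite EFinM.
  rewrite (@RintegralZl _ _ _ lebesgue_measure `[xl e, xh e] (fun x => fX e x) K); last 2 first.
  - exact: measurable_itv.
  - exact: fX_int.
  by rewrite RintfX mulr1.
rewrite /intX.
have -> : (fun x => ((g x + K) * fX e x)%:E) =
  ((fun x => (g x * fX e x)%:E) \+ (fun x => K%:E * (fX e x)%:E))%E.
  by apply/funext => x /=; rewrite mulrDl EFinD EFinM.
apply: integrableD => //.
by apply: integrableZl => //; exact: fX_int.
Qed.

Lemma EY_shift (y : Y) (m c : Y -> R) (K : R) : inM e m ->
  EY e y (fun y' => m y' * (c y' + K)) = EY e y (fun y' => m y' * c y') + K.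
Proof.
case=> _ /(_ y) hs.
rewrite /EY -[K in RHS]mulr1 -hs mulr_sumr -big_split /=.
by apply: eq_bigr => i _; ring.
Qed.

End Helpers.

Theorem lemma1 (R : realType) (Y : finType) (e : economy R Y) (s : @eq_obj R Y) :
  primitives_ok e ->
  recursive_equilibrium e s ->
  forall zh : R, zh <> zbar e ->
  exists s' : @eq_obj R Y,
    recursive_equilibrium (with_zbar e zh) s' /\
    q s' = q s /\ cB s' = cB s /\ BB s' = BB s /\ dlt s' = dlt s.
Proof.
move=> pok [q0 [gB [bo [[lo1 [lo2 lo3]] [mc cons]]]]] zh _.
set d := zh - zbar e.
set K := d / (1 - gam e).
have hg : 0 < gam e < 1.
  by case: pok => _ [_ [_ [_ [_ [_ [_ [_ [_ [_ [_ [_ [_ [_ [_ [_ [_ [_ [? _]]]]]]]]]]]]]]]]]].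
have B0 : Bset e 0.
  by case: pok => _ [_ [_ [_ [_ [_ [_ [_ [_ [? _]]]]]]]]].
have hK : d + gam e * K = K.
  rewrite /K; field; lra.
pose s' := EqObj (cB s) (BB s) (fun x y B b => cL s x y B b + d) (bL s) (mR s) (mA s)
  (dlt s) (VR s) (VA s) (fun x y B b => WR s x y B b + K) (fun y => WA s y + K)
  (Gam s) (q s).
exists s'; split; last by [].
have Wf : forall x y B b, Wfun s' x y B b = Wfun s x y B b + K.
  by move=> x y B b; rewrite /Wfun /=; case: (dlt s x y B).
have cW : forall y B b, Bset e B -> Bset e b ->
    calW (with_zbar e zh) s' y B b = calW e s y B b + K /\
    intX (with_zbar e zh) (fun x => Wfun s' x y B b).
  move=> y B b hB hb.
  have [h1 h2] := EX_shift pok K (lo1 y B b hB hb).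
  split.
    rewrite /calW -h1; congr (EX _ _); apply/funext => x; exact: Wf.
  by move: h2; congr (intX _ _); apply/funext => x; rewrite Wf.
have JRs : forall x y B b m b', inX e x -> Bset e B -> Bset e b' -> inM e m ->
    JR (with_zbar e zh) s' x y B b m b' = (JR e s x y B b m b' + K%:E)%E.
  move=> x y B b m b' hx hB hb' hm.
  rewrite /JR.
  have -> : EY (with_zbar e zh) y (fun y' => m y' * calW (with_zbar e zh) s' y' (Gam s' x y B) b')
     = EY e y (fun y' => m y' * calW e s y' (Gam s x y B) b') + K.
    rewrite -(EY_shift y _ K hm); apply: eq_bigr => y' _ /=.
    by rewrite (cW y' _ _ (gB x y B hx hB) hb').1.
  rewrite /= -addeAC -EFinD; congr (_%:E + _)%E.
  rewrite /consL /= -[in RHS]hK /d; ring.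
have JAs : forall y m, inM e m ->
    JA (with_zbar e zh) s' y m = (JA e s y m + K%:E)%E.
  move=> y m hm; rewrite /JA.
  have -> : EY (with_zbar e zh) y (fun y' => m y' * ((1 - pi_ (with_zbar e zh)) * WA s' y' +
        pi_ (with_zbar e zh) * calW (with_zbar e zh) s' y' 0 0))
     = EY e y (fun y' => m y' * ((1 - pi_ e) * WA s y' + pi_ e * calW e s y' 0 0)) + K.
    rewrite -(EY_shift y _ K hm); apply: eq_bigr => y' _ /=.
    rewrite (cW y' _ _ B0 B0).1 /=; ring.
  rewrite /= -addeAC -EFinD; congr (_%:E + _)%E.
  rewrite -[in RHS]hK /d; ring.
split; first exact: q0.
split; first exact: gB.
split; first exact: bo.
split; last by split.
split.
  by move=> y' B' b' hB hb; exact: (cW y' B' b' hB hb).2.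
split.
  move=> x y B b hx hB hb.
  have [[h1 h1'] h2 h3 h4 h5] := lo2 x y B b hx hB hb.
  split.
  - by split.
  - by rewrite /= h2 /consL /= /d; ring.
  - by rewrite JRs // -h3 EFinD.
  - by move=> b' hb'; rewrite !JRs //; apply: leeD2r; apply: h4.
  - move=> m hm; have [bm hbm [hm1 hm2]] := h5 m hm.
    exists bm => //; split.
      by move=> b' hb'; rewrite !JRs //; apply: leeD2r; apply: hm1.
    by rewrite JRs // /= EFinD; apply: leeD2r.
move=> y; have [h1 [h2 h3]] := lo3 y.
split; first exact: h1.
split; first by rewrite JAs // /= EFinD h2.
by move=> m hm; rewrite !JAs //; apply: leeD2r; apply: h3.
Qed.
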